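(* Let $P$ be a pregroup, $X$ a reduced word of length $n$ in $P$, and $A=(a_1,\dots,a_{n-1})$, $B=(b_1,\dots,b_{n-1})$ words of length $n-1$. If $X\star A$ and $(X\star A)\star B$ are defined, then $AB=(a_1b_1,\dots,a_{n-1}b_{n-1})$ is defined (i.e. each $a_ib_i$ is defined), and $(X\star A)\star B=X\star(AB)$.
   Context: A pregroup consists of a set $P$, an element $1\in P$, a function $P\to P$, $x\mapsto x^{-1}$, a subset $D\subseteq P\times P$, and a function $D\to P$, $(x,y)\mapsto xy$; we say ''$xy$ is defined'' when $(x,y)\in D$. The axioms: (1) for all $x$, $1x$ and $x1$ are defined and $1x=x1=x$; (2) for all $x$, $xx^{-1}$ and $x^{-1}x$ are defined and equal $1$; (3) if $xy$ is defined then $y^{-1}x^{-1}$ is defined and $(xy)^{-1}=y^{-1}x^{-1}$; (4) if $xy$ and $yz$ are defined, then $x(yz)$ is defined iff $(xy)z$ is defined, and then $x(yz)=(xy)z$; (5) if $wx$, $xy$, $yz$ are all defined, then $w(xy)$ is defined or $(xy)z$ is defined. A word of length $n\ge1$ is an $n$-tuple of elements of $P$; $(x_1,\dots,x_n)$ is reduced if for no $i$ is $x_ix_{i+1}$ defined. For a word $X=(x_1,\dots,x_n)$ and a word $A=(a_1,\dots,a_{n-1})$, with $a_0=a_n=1$: if for all $i$ the products $x_ia_i$, $a_{i-1}^{-1}x_i$ and $(a_{i-1}^{-1}x_i)a_i$ are defined, then the interleaving $X\star A$ is defined and equals $(y_1,\dots,y_n)$ with $y_i=(a_{i-1}^{-1}x_i)a_i$.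 For words $A,B$ of length $n-1$, $AB$ is defined when every $a_ib_i$ is defined, and then $AB=(a_1b_1,\dots,a_{n-1}b_{n-1})$. *)

(* Defs.v *)
From Stdlib Require Import Arith Lia.

Record pregroup := Pregroup {
  carrier :> Type;
  one : carrier;
  inv : carrier -> carrier;
  mul : carrier -> carrier -> option carrier;
  ax1 : forall x, mul one x = Some x /\ mul x one = Some x;
  ax2 : forall x, mul x (inv x) = Some one /\ mul (inv x) x = Some one;
  ax3 : forall x y xy, mul x y = Some xy -> mul (inv y) (inv x) = Some (inv xy);
  ax4 : forall x y z xy yz, mul x y = Some xy -> mul y z = Some yz ->
          (forall w, mul x yz = Some w <-> mul xy z = Some w) /\
          ((exists w, mul x yz = Some w) <-> (exists w, mul xy z = Some w));
  ax5 : forall w x y z wx xy yz, mul w x = Some wx -> mul x y = Some xy ->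
          mul y z = Some yz ->
          (exists v, mul w xy = Some v) \/ (exists v, mul xy z = Some v)
}.

Section Words.
Variable P : pregroup.

Definition defined (x y : P) : Prop := exists z, mul P x y = Some z.

(* A word of length n is represented by a function x : nat -> P, whose
   relevant entries are x 1, ..., x n (other values are ignored). *)

Definition reduced (n : nat) (X : nat -> P) : Prop :=
  forall i, 1 <= i -> i < n -> ~ defined (X i) (X (S i)).

Definition ext (n : nat) (A : nat -> P) (i : nat) : P :=
  if Nat.eqb i 0 then one P else if Nat.eqb i n then one P else A i.

(* X * A is defined and equals Y (as words of length n) *)
Definition interleave_eq (n : nat) (X A Y : nat -> P) : Prop :=
  forall i, 1 <= i <= n ->
    exists u, mul P (inv P (ext n A (i - 1))) (X i) = Some u /\
    defined (X i) (ext n A i) /\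
    mul P u (ext n A i) = Some (Y i).

Definition interleave_defined (n : nat) (X A : nat -> P) : Prop :=
  exists Y, interleave_eq n X A Y.

Definition prodword_eq (n : nat) (A B C : nat -> P) : Prop :=
  forall i, 1 <= i <= n - 1 -> mul P (A i) (B i) = Some (C i).

End Words.

(* Main.v *)
Require Import Defs.
From Stdlib Require Import Arith Lia.

Lemma A4 (P : pregroup) (x y z xy yz w : P) :
  mul P x y = Some xy -> mul P y z = Some yz -> mul P x yz = Some w -> mul P xy z = Some w.
Proof. intros H1 H2 H3. exact (proj1 (proj1 (ax4 P x y z xy yz H1 H2) w) H3). Qed.

Lemma A4' (P : pregroup) (x y z xy yz w : P) :
  mul P x y = Some xy -> mul P y z = Some yz -> mul P xy z = Some w -> mul P x yz = Some w.
Proof. intros H1 H2 H3. exact (proj2 (proj1 (ax4 P x y z xy yz H1 H2) w) H3). Qed.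

Lemma inv_inv (P : pregroup) (x : P) : inv P (inv P x) = x.
Proof.
  pose proof (proj1 (ax2 P x)) as H1.
  pose proof (proj1 (ax2 P (inv P x))) as H2.
  pose proof (A4 P _ _ _ _ _ _ H1 H2 (proj2 (ax1 P x))) as H3.
  rewrite (proj1 (ax1 P _)) in H3. congruence.
Qed.

Lemma inv_one (P : pregroup) : inv P (one P) = one P.
Proof.
  pose proof (proj1 (ax2 P (one P))) as H1.
  rewrite (proj1 (ax1 P _)) in H1. congruence.
Qed.

Lemma L3l (P : pregroup) (x y p : P) : mul P x y = Some p -> mul P (inv P x) p = Some y.
Proof.
  intro H. eapply A4'. exact (proj2 (ax2 P x)). exact H. exact (proj1 (ax1 P y)).
Qed.

Lemma L3l' (P : pregroup) (a x u : P) : mul P (inv P a) x = Some u -> mul P a u = Some x.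
Proof. intro H. pose proof (L3l P _ _ _ H) as H'. rewrite inv_inv in H'. exact H'. Qed.

Lemma L3r (P : pregroup) (x y p : P) : mul P x y = Some p -> mul P p (inv P y) = Some x.
Proof.
  intro H. eapply A4. exact H. exact (proj1 (ax2 P y)). exact (proj2 (ax1 P x)).
Qed.

Lemma ext0 (P : pregroup) n (A : nat -> P) : ext P n A 0 = one P.
Proof. reflexivity. Qed.

Lemma extn (P : pregroup) n (A : nat -> P) : ext P n A n = one P.
Proof. unfold ext. destruct (Nat.eqb n 0); [reflexivity|]. rewrite Nat.eqb_refl. reflexivity. Qed.

Lemma extmid (P : pregroup) n (A : nat -> P) i : 1 <= i < n -> ext P n A i = A i.
Proof.
  intro H. unfold ext.
  destruct (Nat.eqb_spec i 0); [lia|]. destruct (Nat.eqb_spec i n); [lia|]. reflexivity.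
Qed.

Lemma facts (P : pregroup) n (X A Y : nat -> P) i :
  interleave_eq P n X A Y -> 1 <= i <= n ->
  exists u p,
    mul P (inv P (ext P n A (i-1))) (X i) = Some u /\
    mul P (X i) (ext P n A i) = Some p /\
    mul P u (ext P n A i) = Some (Y i) /\
    mul P (inv P (ext P n A (i-1))) p = Some (Y i) /\
    mul P (ext P n A (i-1)) (Y i) = Some p /\
    mul P (Y i) (inv P (ext P n A i)) = Some u /\
    mul P (ext P n A (i-1)) u = Some (X i) /\
    mul P p (inv P (ext P n A i)) = Some (X i).
Proof.
  intros HI Hi. destruct (HI i Hi) as [u [Hu [[p Hp] Hy]]].
  exists u, p.
  assert (H4 : mul P (inv P (ext P n A (i-1))) p = Some (Y i)) by (eapply A4'; eauto).
  repeat split; auto.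
  - apply L3l'; auto.
  - apply L3r; auto.
  - apply L3l'; auto.
  - apply L3r; auto.
Qed.

Lemma one_l (P : pregroup) (x y : P) : mul P (one P) x = Some y -> y = x.
Proof. rewrite (proj1 (ax1 P x)). congruence. Qed.
Lemma one_r (P : pregroup) (x y : P) : mul P x (one P) = Some y -> y = x.
Proof. rewrite (proj2 (ax1 P x)). congruence. Qed.

Lemma Yred (P : pregroup) n (X A Y : nat -> P) :
  reduced P n X -> interleave_eq P n X A Y -> reduced P n Y.
Proof.
  intros HR HI i Hi1 Hin [w Hw].
  destruct (facts P n X A Y i HI ltac:(lia)) as [u1 [p1 [F1 [F2 [F3 [F4 [F5 [F6 [F7 F8]]]]]]]]].
  destruct (facts P n X A Y (S i) HI ltac:(lia)) as [u2 [p2 [G1 [G2 [G3 [G4 [G5 [G6 [G7 G8]]]]]]]]].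
  assert (E : S i - 1 = i) by lia. rewrite E in *.
  assert (NP : forall w, mul P p1 u2 <> Some w).
  { intros w' Hw'. apply (HR i Hi1 Hin). exists w'. eapply A4; eauto. }
  assert (S1 : forall w, mul P p1 (Y (S i)) <> Some w).
  { intros w' Hw'.
    destruct (Nat.eq_dec (S i) n) as [En|En].
    - rewrite En in G3. rewrite extn in G3. apply one_r in G3. rewrite <- En in G3.
      rewrite G3 in Hw'. eapply NP; eauto.
    - destruct (facts P n X A Y (S (S i)) HI ltac:(lia)) as [u3 [p3 [K1 [K2 [K3 [K4 [K5 [K6 [K7 K8]]]]]]]]].
      assert (E2 : S (S i) - 1 = S i) by lia. rewrite E2 in *.
      destruct (ax5 P _ _ _ _ _ _ _ Hw' G6 K1) as [[v Hv]|[v Hv]].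
      + eapply NP; eauto.
      + rewrite extmid in F2, G7 by lia.
        destruct (ax5 P _ _ _ _ _ _ _ F2 G7 Hv) as [[v' Hv']|[v' Hv']].
        * apply (HR i Hi1 Hin). exists v'. exact Hv'.
        * apply (HR (S i) ltac:(lia) ltac:(lia)). exists v'. exact Hv'. }
  destruct (Nat.eq_dec i 1) as [Ei|Ei].
  - subst i. simpl in F5. apply one_l in F5. subst p1. eapply S1; eauto.
  - destruct i as [|j]; [lia|].
    destruct (facts P n X A Y j HI ltac:(lia)) as [u0 [p0 [H1 [H2 [H3 [H4 [H5 [H6 [H7 H8]]]]]]]]].
    assert (E3 : S j - 1 = j) by lia. rewrite E3 in *.
    destruct (ax5 P _ _ _ _ _ _ _ H2 F5 Hw) as [[v Hv]|[v Hv]].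
    + destruct (ax5 P _ _ _ _ _ _ _ Hv F8 G1) as [[v' Hv']|[v' Hv']].
      * apply (HR j ltac:(lia) ltac:(lia)). exists v'. exact Hv'.
      * apply (HR (S j) ltac:(lia) ltac:(lia)). exists v'. exact Hv'.
    + eapply S1; eauto.
Qed.

Theorem mainTheorem9 (P : pregroup) (n : nat) (Hn : 1 <= n)
  (X A B : nat -> P) (Y Z : nat -> P) :
  reduced P n X ->
  interleave_eq P n X A Y ->
  interleave_eq P n Y B Z ->
  (forall i, 1 <= i <= n - 1 -> defined P (A i) (B i)) /\
  (exists C, prodword_eq P n A B C /\ interleave_eq P n X C Z).
Proof.
  intros HR HXA HYB.
  pose proof (Yred P n X A Y HR HXA) as HRY.
  assert (AB : forall i, 1 <= i <= n - 1 -> defined P (A i) (B i)).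
  { intros i Hi.
    destruct (facts P n X A Y i HXA ltac:(lia)) as [u1 [p1 [F1 [F2 [F3 [F4 [F5 [F6 [F7 F8]]]]]]]]].
    destruct (facts P n Y B Z i HYB ltac:(lia)) as [v1 [r1 [G1 [G2 [G3 [G4 [G5 [G6 [G7 G8]]]]]]]]].
    destruct (facts P n Y B Z (S i) HYB ltac:(lia)) as [v2 [r2 [K1 [K2 [K3 [K4 [K5 [K6 [K7 K8]]]]]]]]].
    assert (E : S i - 1 = i) by lia. rewrite E in *.
    rewrite extmid in F3, G2, K7 by lia.
    pose proof (L3l P _ _ _ F3) as L.
    destruct (ax5 P _ _ _ _ _ _ _ L G2 K7) as [[v Hv]|[v Hv]].
    - exists v. eapply A4; eauto.
    - exfalso. apply (HRY i ltac:(lia) ltac:(lia)). exists v. eapply A4'; eauto. }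
  split; [exact AB|].
  set (C := fun i => match mul P (A i) (B i) with Some c => c | None => one P end).
  assert (gam : forall j, j <= n -> mul P (ext P n A j) (ext P n B j) = Some (ext P n C j)).
  { intros j Hj.
    destruct (Nat.eq_dec j 0) as [E|E].
    - subst j. rewrite !ext0. apply ax1.
    - destruct (Nat.eq_dec j n) as [E'|E'].
      + subst j. rewrite !extn. apply ax1.
      + rewrite !extmid by lia. destruct (AB j ltac:(lia)) as [c Hc].
        unfold C. rewrite Hc. reflexivity. }
  exists C. split.
  { intros i Hi. destruct (AB i Hi) as [c Hc]. unfold C. rewrite Hc. reflexivity. }
  intros i Hi.
  destruct (facts P n X A Y i HXA Hi) as [u [p [F1 [F2 [F3 [F4 [F5 [F6 [F7 F8]]]]]]]]].
  destruct (facts P n Y B Z i HYB Hi) as [v [r [G1 [G2 [G3 [G4 [G5 [G6 [G7 G8]]]]]]]]].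
  pose proof (gam i ltac:(lia)) as Gi.
  pose proof (gam (i-1) ltac:(lia)) as Gi1.
  assert (Ha : defined P (X i) (ext P n C i)).
  { destruct (Nat.eq_dec i n) as [En|En].
    - subst i. rewrite extn. exists (X n). apply ax1.
    - destruct (facts P n Y B Z (S i) HYB ltac:(lia)) as [v2 [r2 [K1 [K2 [K3 [K4 [K5 [K6 [K7 K8]]]]]]]]].
      assert (E : S i - 1 = i) by lia. rewrite E in *.
      destruct (ax5 P _ _ _ _ _ _ _ F5 G2 K7) as [[w Hw]|[w Hw]].
      + exists w. eapply A4'. exact F2. exact Gi. eapply A4; eauto.
      + exfalso. apply (HRY i ltac:(lia) ltac:(lia)). exists w. eapply A4'; eauto. }
  assert (Hb : exists t, mul P (inv P (ext P n C (i-1))) (X i) = Some t /\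
                         mul P v (inv P (ext P n A i)) = Some t).
  { destruct (Nat.eq_dec i 1) as [E1|E1].
    - subst i. simpl in *. rewrite inv_one in F1, G1 |- *.
      apply one_l in F1. apply one_l in G1. subst u v.
      exists (X 1). split; [apply ax1|exact F6].
    - destruct i as [|j]; [lia|].
      destruct (facts P n Y B Z j HYB ltac:(lia)) as [v0 [r0 [H1 [H2 [H3 [H4 [H5 [H6 [H7 H8]]]]]]]]].
      assert (E3 : S j - 1 = j) by lia. rewrite E3 in *.
      destruct (ax5 P _ _ _ _ _ _ _ H8 G1 F6) as [[w Hw]|[t Ht]].
      + exfalso. apply (HRY j ltac:(lia) ltac:(lia)). exists w. eapply A4; eauto.
      + exists t. split; [|exact Ht].
        pose proof (ax3 P _ _ _ Gi1) as Hinv.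
        eapply A4. exact Hinv. exact F1. eapply A4'. exact G1. exact F6. exact Ht. }
  destruct Hb as [t [Ht1 Ht2]].
  exists t. split; [exact Ht1|]. split; [exact Ha|].
  assert (Hta : mul P t (ext P n A i) = Some v).
  { eapply A4. exact Ht2. exact (proj2 (ax2 P _)). exact (proj2 (ax1 P v)). }
  eapply A4'. exact Hta. exact Gi. exact G3.
Qed.
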